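(* Let $X$ be a complete hyperbolic surface of finite area, $p$ a cusp and $N_p(r)$ a horoball neighborhood of $p$. For positive integers $n,m$, the number of intersection points (with multiplicity) between an $n$-excursion and an $m$-excursion in $N_p(r)$ is at most $2\min(n,m)+2$.
   Context: $N_p(r)$ is the embedded horoball neighborhood of $p$ whose boundary horocycle $\partial N_p(r)$ has length $r$. Lift to the upper half-plane with $p$ at $\infty$, so $N_p(r)$ lifts to $\{\mathrm{Im}\,z\ge h\}$ and the stabilizer of $\infty$ is generated by a translation $z\mapsto z+w$. An $n$-excursion in $N_p(r)$ is a geodesic arc contained in $N_p(r)$ with both endpoints on $\partial N_p(r)$ whose lifted endpoints $z_1,z_2$ satisfy $n\le|\mathrm{Re}\,z_1-\mathrm{Re}\,z_2|/w<n+1$ (winding number $n$ around the cusp). *)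

(* Defs.v *)
(* Model of the embedded horoball neighbourhood N_p(r) via its lift to the
   upper half-plane: points are pairs (x, y) = (Re z, Im z), N_p(r) lifts to
   {y >= h}, and the cusp stabiliser is generated by z |-> z + w with
   w = r * h (so the boundary horocycle has length w / h = r). *)
From HB Require Import structures.
From mathcomp Require Import all_boot all_order all_algebra.
From mathcomp Require Import reals.
Set Implicit Arguments. Unset Strict Implicit. Unset Printing Implicit Defensive.
Import Order.TTheory GRing.Theory Num.Theory.
Local Open Scope ring_scope.

(* The lift of a geodesic arc of N_p(r) with both endpoints on the horocycle
   {y = h}: the part above height h of the semicircle (geodesic of H^2) with
   Euclidean centre (c, 0) and radius rho. *)
Definition on_arc {R : realType} (h c rho : R) (p : R * R) : Prop :=
  (p.1 - c) ^+ 2 + p.2 ^+ 2 = rho ^+ 2 /\ h <= p.2.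

Definition excursion_endpoints {R : realType} (h c rho : R) : (R * R) * (R * R) :=
  ((c - Num.sqrt (rho ^+ 2 - h ^+ 2), h), (c + Num.sqrt (rho ^+ 2 - h ^+ 2), h)).

Definition is_n_excursion {R : realType} (w h c rho : R) (n : nat) : Prop :=
  h < rho /\
  let z1 := (excursion_endpoints h c rho).1 in
  let z2 := (excursion_endpoints h c rho).2 in
  n%:R <= `|z1.1 - z2.1| / w < n.+1%:R.

(* Two lifted arcs project to the same arc of the cusp neighbourhood iff they
   differ by an element of the stabiliser <z |-> z + w>. *)
Definition same_excursion {R : realType} (w c1 rho1 c2 rho2 : R) : Prop :=
  rho1 = rho2 /\ exists k : int, c1 - c2 = k%:~R * w.

(* An intersection point, counted with multiplicity: a pair (p1, p2) of
   points on the two lifted arcs (i.e. a pair of parameter values) with the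
   same image in the quotient {y >= h} / <z |-> z + w>. *)
Definition excursion_intersection {R : realType} (w h c1 rho1 c2 rho2 : R)
    (q : (R * R) * (R * R)) : Prop :=
  on_arc h c1 rho1 q.1 /\ on_arc h c2 rho2 q.2 /\
  q.1.2 = q.2.2 /\ exists k : int, q.1.1 - q.2.1 = k%:~R * w.

(* Main.v *)
Require Import Defs.
From HB Require Import structures.
From mathcomp Require Import all_boot all_order all_algebra.
From mathcomp Require Import reals.
From mathcomp Require Import ring lra zify.
Import Order.TTheory GRing.Theory Num.Theory.
Local Open Scope ring_scope.

Lemma absdiff0 (R : realType) (U V A1 A2 t : R) :
  0 <= U -> 0 <= V -> 0 <= A1 -> 0 <= A2 -> 0 <= t ->
  U^+2 + t = A1^+2 -> V^+2 + t = A2^+2 ->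
  U <= A1 /\ V <= A2 /\ (A2 <= A1 -> A1 - A2 <= U - V) /\ (A1 <= A2 -> A2 - A1 <= V - U).
Proof.
move=> U0 V0 A10 A20 t0 e1 e2.
have h1 : U <= A1 by nra.
have h2 : V <= A2 by nra.
split=> //; split=> //.
wlog hA : U V A1 A2 U0 V0 A10 A20 e1 e2 h1 h2 / A2 <= A1.
  move=> W; case/orP: (le_total A2 A1) => hA; first exact: W.
  have [] := W V U A2 A1 V0 U0 A20 A10 e2 e1 h2 h1 hA.
  move=> H1 H2; split=> H; [have : A1 = A2 by lra | by apply: H1].
  move=> E; rewrite E in e1 *; have : U = V by nra. lra.
have p1 : (U * A2) ^+ 2 >= (A1 * V) ^+ 2.
  rewrite !exprMn; have -> : U ^+ 2 = A1 ^+ 2 - t by lra.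
  have -> : V ^+ 2 = A2 ^+ 2 - t by lra.
  have q : 0 <= A1 ^+ 2 - A2 ^+ 2 by nra.
  have := mulr_ge0 t0 q. nra.
have p2 : U * A2 >= A1 * V.
  have g1 : 0 <= U * A2 by nra.
  have g2 : 0 <= A1 * V by nra.
  nra.
have p3 : (A1 + V) ^+ 2 <= (U + A2) ^+ 2 by nra.
have p4 : A1 + V <= U + A2 by nra.
split=> H; [lra | ].
have : A1 = A2 by lra. move=> E; rewrite E in e1 *; have : U = V by nra. lra.
Qed.

Lemma geo (R : realType) (u v A1 A2 t : R) :
  0 <= A1 -> 0 <= A2 -> 0 <= t ->
  u^+2 + t = A1^+2 -> v^+2 + t = A2^+2 ->
  (0 <= u - v /\ A1 - A2 <= u - v /\ A2 - A1 <= u - v /\ u - v <= A1 + A2) \/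
  (u - v <= 0 /\ u - v <= A2 - A1 /\ u - v <= A1 - A2 /\ - (A1 + A2) <= u - v).
Proof.
move=> A10 A20 t0 e1 e2.
have [U [U0 [Ue Us]]] : exists U, 0 <= U /\ U ^+ 2 = u ^+ 2 /\ (U = u \/ U = - u).
  case: (lerP 0 u) => hu; [exists u | exists (- u)].
    by split=> //; split=> //; left.
  by split; [lra | split; [rewrite sqrrN | right]].
have [V [V0 [Ve Vs]]] : exists V, 0 <= V /\ V ^+ 2 = v ^+ 2 /\ (V = v \/ V = - v).
  case: (lerP 0 v) => hv; [exists v | exists (- v)].
    by split=> //; split=> //; left.
  by split; [lra | split; [rewrite sqrrN | right]].
rewrite -Ue in e1; rewrite -Ve in e2.
have [h1 [h2 [h3 h4]]] := @absdiff0 R U V A1 A2 t U0 V0 A10 A20 t0 e1 e2.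
have h5 : A1 - A2 <= U - V /\ A2 - A1 <= U - V \/ A2 - A1 <= V - U /\ A1 - A2 <= V - U.
  case/orP: (le_total A2 A1) => hA; [left; have := h3 hA | right; have := h4 hA]; lra.
move: Us Vs h1 h2 h5 U0 V0 => [->|->] [->|->] h1 h2 h5 U0 V0;
  (case: (lerP 0 (u - v)) => hd; [left | right]); lra.
Qed.

Lemma count_int (R : realType) (w lo L : R) (M : nat) (k : int) :
  0 < w -> L < M.+1%:R * w -> lo <= k%:~R * w -> k%:~R * w <= lo + L ->
  k \in [seq Num.ceil (lo / w) + j%:Z | j <- iota 0 M.+1].
Proof.
move=> w0 hL h1 h2.
set k0 := Num.ceil (lo / w).
have hk0 : lo <= k0%:~R * w.
  by rewrite -ler_pdivrMr //; apply: Num.Theory.ceil_ge.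
have hk : k0 <= k.
  by rewrite Num.Theory.ceil_le_int ler_pdivrMr.
have hd : ((k - k0)%:~R : R) < (Posz M.+1)%:~R.
  rewrite rmorphB /=.
  have : ((k%:~R - k0%:~R) : R) * w < M.+1%:R * w by nra.
  by rewrite ltr_pM2r.
rewrite ltr_int in hd.
apply/mapP; exists `|k - k0|%N.
  rewrite mem_iota add0n; lia.
rewrite gez0_abs; first lia.
lia.
Qed.

Lemma sqA (R : realType) (rho h : R) : 0 < h -> h < rho ->
  0 <= Num.sqrt (rho ^+ 2 - h ^+ 2) /\ Num.sqrt (rho ^+ 2 - h ^+ 2) ^+ 2 = rho ^+ 2 - h ^+ 2.
Proof.
move=> h0 hr; split; first exact: sqrtr_ge0.
rewrite sqr_sqrtr //; nra.
Qed.

Lemma q_facts (R : realType) (w h c1 rho1 c2 rho2 : R) q :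
  0 < h -> h < rho1 -> h < rho2 ->
  excursion_intersection w h c1 rho1 c2 rho2 q ->
  exists k : int, q.1.1 - q.2.1 = k%:~R * w /\
  let A1 := Num.sqrt (rho1 ^+ 2 - h ^+ 2) in
  let A2 := Num.sqrt (rho2 ^+ 2 - h ^+ 2) in
  let d := c2 + k%:~R * w - c1 in
  (0 <= d /\ A1 - A2 <= d /\ A2 - A1 <= d /\ d <= A1 + A2) \/
  (d <= 0 /\ d <= A2 - A1 /\ d <= A1 - A2 /\ - (A1 + A2) <= d).
Proof.
move=> h0 hr1 hr2 [[e1 hy1] [[e2 hy2] [ey [k ek]]]].
exists k; split => //.
move=> A1 A2 d.
have [A10 A1e] := @sqA R rho1 h h0 hr1.
have [A20 A2e] := @sqA R rho2 h h0 hr2.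
have t0 : 0 <= q.1.2 ^+ 2 - h ^+ 2 by nra.
have := @geo R (q.1.1 - c1) (q.1.1 - c2 - k%:~R * w) A1 A2 (q.1.2 ^+ 2 - h ^+ 2)
  A10 A20 t0.
have -> : q.1.1 - c1 - (q.1.1 - c2 - k%:~R * w) = d by rewrite /d; ring.
apply.
  rewrite A1e; lra.
rewrite A2e -e2 ey.
have -> : q.1.1 - c2 - k%:~R * w = q.2.1 - c2 by lra.
ring.
Qed.

Lemma exc_len (R : realType) (w h c rho : R) (n : nat) :
  0 < w -> is_n_excursion w h c rho n ->
  h < rho /\ Num.sqrt (rho ^+ 2 - h ^+ 2) * 2 < n.+1%:R * w.
Proof.
move=> w0 [hr /= /andP [_ H]]; split => //.
set A := Num.sqrt _ in H *.
have A0 : 0 <= A by exact: sqrtr_ge0.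
have e : `|c - A - (c + A)| = A * 2.
  have -> : c - A - (c + A) = - (A * 2) by ring.
  rewrite normrN ger0_norm //; lra.
rewrite e ltr_pdivrMr // in H.
Qed.

Lemma inj_lemma (R : realType) (w h c1 rho1 c2 rho2 : R) q q' :
  0 < h -> h < rho1 -> h < rho2 ->
  ~ same_excursion w c1 rho1 c2 rho2 ->
  excursion_intersection w h c1 rho1 c2 rho2 q ->
  excursion_intersection w h c1 rho1 c2 rho2 q' ->
  q.1.1 - q.2.1 = q'.1.1 - q'.2.1 -> q = q'.
Proof.
case: q => [[x y] [x2 y2]]; case: q' => [[x' y'] [x2' y2']] /=.
move=> h0 hr1 hr2 nse [[e1 hy1] [[e2 hy2] [ey [k ek]]]]
  [[e1' hy1'] [[e2' hy2'] [ey' [k' ek']]]] /= ef.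
rewrite /= in e1 hy1 e2 hy2 ey ek e1' hy1' e2' hy2' ey' ek'.
set D := c2 + k%:~R * w - c1.
have D0 : D != 0.
  apply/eqP => D0; apply: nse; split.
    have e : rho1 ^+ 2 = rho2 ^+ 2.
      rewrite -e1 -e2 -ey.
      have -> : x2 - c2 = x - c1 - D by rewrite /D; lra.
      by rewrite D0 subr0.
    nra.
  exists k; rewrite /D in D0; lra.
have ex2 : x2 = x - k%:~R * w by lra.
have ex2' : x2' = x' - k%:~R * w by lra.
have key : D * (x - x') = 0.
  have a1 : (x2 - c2) = (x - c1) - D by rewrite /D; lra.
  have a2 : (x2' - c2) = (x' - c1) - D by rewrite /D; lra.
  rewrite a1 -ey in e2; rewrite a2 -ey' in e2'.
  nra.
have exx : x = x'.
  move/eqP: key; rewrite mulf_eq0 (negbTE D0) /= subr_eq0 => /eqP //.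
have eyy : y = y'.
  rewrite exx in e1; nra.
by rewrite -ey -ey' ex2 ex2' exx eyy.
Qed.

Theorem lemma4p3 (R : realType) (r h : R) (n m : nat)
    (c1 rho1 c2 rho2 : R) :
  0 < r -> 0 < h -> (0 < n)%N -> (0 < m)%N ->
  is_n_excursion (r * h) h c1 rho1 n ->
  is_n_excursion (r * h) h c2 rho2 m ->
  ~ same_excursion (r * h) c1 rho1 c2 rho2 ->
  forall s : seq ((R * R) * (R * R)), uniq s ->
  (forall q, q \in s -> excursion_intersection (r * h) h c1 rho1 c2 rho2 q) ->
  (size s <= 2 * minn n m + 2)%N.
Proof.
move=> r0 h0 _ _ X1 X2 nse s us Hs.
have w0 : 0 < r * h by exact: mulr_gt0.
move: X1 X2 nse Hs; set w := r * h => X1 X2 nse Hs.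
have [hr1 L1] := @exc_len R _ _ _ _ _ w0 X1.
have [hr2 L2] := @exc_len R _ _ _ _ _ w0 X2.
have [A10 _] := @sqA R rho1 h h0 hr1.
have [A20 _] := @sqA R rho2 h h0 hr2.
move: L1 L2 A10 A20.
set A1 := Num.sqrt (rho1 ^+ 2 - h ^+ 2); set A2 := Num.sqrt (rho2 ^+ 2 - h ^+ 2).
move=> L1 L2 A10 A20.
pose f (q : (R * R) * (R * R)) := q.1.1 - q.2.1.
have [lo [L [hL1 [hL2 hk]]]] : exists lo L : R, L <= A1 * 2 /\ L <= A2 * 2 /\
    forall q, q \in s -> exists k : int, f q = k%:~R * w /\
    ((lo <= c2 + k%:~R * w - c1 <= lo + L) \/
     (- (lo + L) <= c2 + k%:~R * w - c1 <= - lo)).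
  case/orP: (le_total A2 A1) => hA.
    exists (A1 - A2), (A2 * 2); split; first lra; split; first lra.
    move=> q /Hs Hq; have [k [ek Hd]] := @q_facts R _ _ _ _ _ _ q h0 hr1 hr2 Hq.
    exists k; split => //; move: Hd => /=; rewrite -/A1 -/A2.
    by case=> H; [left | right]; apply/andP; split; lra.
  exists (A2 - A1), (A1 * 2); split; first lra; split; first lra.
  move=> q /Hs Hq; have [k [ek Hd]] := @q_facts R _ _ _ _ _ _ q h0 hr1 hr2 Hq.
  exists k; split => //; move: Hd => /=; rewrite -/A1 -/A2.
  by case=> H; [left | right]; apply/andP; split; lra.
set M := minn n m.
have LM : L < M.+1%:R * w.
  have [->|->] : M = n \/ M = m.
    rewrite /M; clear; case: (leqP n m) => H; [left | right]; lia.
  - exact: le_lt_trans hL1 L1.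
  - exact: le_lt_trans hL2 L2.
set c := c2 - c1.
pose T := [seq j%:~R * w | j <- [seq Num.ceil ((lo - c) / w) + j%:Z | j <- iota 0 M.+1]
   ++ [seq Num.ceil ((- (lo + L) - c) / w) + j%:Z | j <- iota 0 M.+1]].
have uf : uniq (map f s).
  rewrite map_inj_in_uniq // => q q' hq hq' e.
  have Hq := Hs _ hq; have Hq' := Hs _ hq'.
  exact: (@inj_lemma R w h c1 rho1 c2 rho2 q q' h0 hr1 hr2 nse Hq Hq' e).
have sub : {subset map f s <= T}.
  move=> z /mapP [q hq ->].
  have [k [ek Hd]] := hk q hq.
  rewrite ek; apply/mapP; exists k => //.
  rewrite mem_cat; apply/orP.
  case: Hd => /andP [d1 d2]; [left | right];
    apply: (@count_int R w _ L M k w0 LM); rewrite /c; clear -d1 d2; lra.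
have := uniq_leq_size uf sub.
rewrite size_map /T size_map size_cat !size_map size_iota /M.
clear; lia.
Qed.
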